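(* Every functional $\Lambda$-system algebra over a set $\mathcal{X}$ that has unique fixed points and whose function $\Gamma$ permits reordering is connection-order invariant.
   Context: Let $\Lambda,\mathcal{X}$ be sets. For finite disjoint $\mathcal{I},\mathcal{O}\subseteq\Lambda$ let $\mathfrak{S}_{\mathcal{I},\mathcal{O}}$ be a set of functions $s:\mathcal{X}^{\mathcal{I}}\to\mathcal{X}^{\mathcal{O}}$ (where $\mathcal{X}^{\mathcal{I}}$ is the set of functions $\mathcal{I}\to\mathcal{X}$, i.e. tuples indexed by $\mathcal{I}$), and let $\mathfrak{S}$ be their union. For $s\in\mathfrak{S}_{\mathcal{I},\mathcal{O}}$, $i\in\mathcal{I}$, $o\in\mathcal{O}$, $\mathbf{x}\in\mathcal{X}^{\mathcal{I}\setminus\{i\}}$ let $\mathrm{Fix}(s,i,o,\mathbf{x}):=\{x_i\in\mathcal{X}\mid s(\mathbf{x}\cup\{(i,x_i)\})(o)=x_i\}$. Let $\Gamma$ assign to each $s\in\mathfrak{S}_{\mathcal{I},\mathcal{O}}$ a set of unordered pairs $\{i,o\}$ with $i\in\mathcal{I}$, $o\in\mathcal{O}$, such that $\mathrm{Fix}(s,i,o,\mathbf{x})\neq\emptyset$ for all $\mathbf{x}$, and for each such $s$ and $\{i,o\}\in\Gamma(s)$ let $\phi^s_{i,o}:\mathcal{X}^{\mathcal{I}\setminus\{i\}}\to\mathcal{X}$ satisfy $\phi^s_{i,o}(\mathbf{x})\in\mathrm{Fix}(s,i,o,\mathbf{x})$. Define $\lambda(s)=\mathcal{I}\cup\mathcal{O}$;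 for $s_1\in\mathfrak{S}_{\mathcal{I}_1,\mathcal{O}_1}$, $s_2\in\mathfrak{S}_{\mathcal{I}_2,\mathcal{O}_2}$ with $\mathcal{I}_1,\mathcal{I}_2,\mathcal{O}_1,\mathcal{O}_2$ pairwise disjoint, $s_1\parallel s_2:\mathcal{X}^{\mathcal{I}_1\cup\mathcal{I}_2}\to\mathcal{X}^{\mathcal{O}_1\cup\mathcal{O}_2}$ with $(s_1\parallel s_2)(\mathbf{x})(o_j)=s_j(\mathbf{x}|_{\mathcal{I}_j})(o_j)$ for $o_j\in\mathcal{O}_j$; and for $\{i,o\}\in\Gamma(s)$, $\gamma_{i,o}(s):\mathcal{X}^{\mathcal{I}\setminus\{i\}}\to\mathcal{X}^{\mathcal{O}\setminus\{o\}}$, $\gamma_{i,o}(s)(\mathbf{x})=s(\mathbf{x}\cup\{(i,\phi^s_{i,o}(\mathbf{x}))\})|_{\mathcal{O}\setminus\{o\}}$. If $\mathfrak{S}$ is closed under $\parallel$ and $\gamma$ and for all $s_1,s_2$ with $\lambda(s_1)\cap\lambda(s_2)=\emptyset$, $j\in\{1,2\}$, $i,o\in\lambda(s_j)$ we have $\{i,o\}\in\Gamma(s_1\parallel s_2)\iff\{i,o\}\in\Gamma(s_j)$, then $(\mathfrak{S},\lambda,\parallel,\Gamma,\gamma)$ is called a functional $\Lambda$-system algebra over $\mathcal{X}$. It has unique fixed points if $|\mathrm{Fix}(s,i,o,\mathbf{x})|=1$ for all $s$, $\{i,o\}\in\Gamma(s)$, $\mathbf{x}$. $\Gamma$ permits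 reordering if for all $s$, $\{i,o\}\in\Gamma(s)$ and $\{i',o'\}\in\Gamma(\gamma_{i,o}(s))$ we have $\{i',o'\}\in\Gamma(s)$ and $\{i,o\}\in\Gamma(\gamma_{i',o'}(s))$; the algebra is connection-order invariant if $\Gamma$ permits reordering and in that situation $\gamma_{i',o'}(\gamma_{i,o}(s))=\gamma_{i,o}(\gamma_{i',o'}(s))$. *)

(* Defs.v *)
From HB Require Import structures.
From mathcomp Require Import all_boot.
From mathcomp Require Import finmap.
From mathcomp Require Import boolp.

Set Implicit Arguments.
Unset Strict Implicit.
Unset Printing Implicit Defensive.

Local Open Scope fset_scope.

Section FunctionalSystems.

(* Lam = the label set Λ (an arbitrary type; made a choiceType classically via
   {classic _} so that finite label sets can be {fset _}); X = the value set. *)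
Variables (Lam : Type) (X : Type).
Local Notation L := {classic Lam}.

(* X^A (tuples indexed by A) is the function type (A -> X), where A : {fset L}
   is coerced to the finite type of its elements. *)
Record sys := Sys { sI : {fset L}; sO : {fset L}; sf : (sI -> X) -> (sO -> X) }.
Arguments sf : clear implicits.

Definition lam (s : sys) : {fset L} := sI s `|` sO s.

Lemma inU_r (A B : {fset L}) (a : A `|` B) : val a \notin A -> val a \in B.
Proof. by move=> h; have := valP a; rewrite in_fsetU (negbTE h). Qed.

Lemma inD1 (A : {fset L}) (b : L) (a : A) : val a != b -> val a \in A `\ b.
Proof. by move=> h; rewrite in_fsetD1 h (valP a). Qed.

Definition restr (A B : {fset L}) (H : A `<=` B) (x : B -> X) : A -> X :=
  fun a => x (fincl H a).

(* x u {(i, xi)} : X^I, for x : X^(I \ {i}) *)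
Definition ext (I : {fset L}) (i : L) (x : (I `\ i) -> X) (xi : X) : I -> X :=
  fun j =>
    (if val j == i as b return (val j == i) = b -> X
     then fun _ => xi
     else fun h => x [` inD1 (negbT h)]) (erefl _).

(* parallel composition s1 || s2 (only meaningful when the label sets are
   pairwise disjoint, which is the only situation where it is used) *)
Definition par (s1 s2 : sys) : sys :=
  @Sys (sI s1 `|` sI s2) (sO s1 `|` sO s2)
    (fun x o =>
       (if val o \in sO s1 as b return (val o \in sO s1) = b -> X
        then fun h => sf s1 (restr (fsubsetUl _ _) x) [` h]
        else fun h => sf s2 (restr (fsubsetUr _ _) x) [` inU_r (negbT h)])
       (erefl _)).

Definition Fix (s : sys) (i o : L) (x : (sI s `\ i) -> X) (xi : X) : Prop :=
  forall o' : sO s, val o' = o -> sf s (ext x xi) o' = xi.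

Arguments Fix : clear implicits.
Definition phiT := forall (s : sys) (i o : L), ((sI s `\ i) -> X) -> X.

Definition gamma (phi : phiT) (s : sys) (i o : L) : sys :=
  @Sys (sI s `\ i) (sO s `\ o)
    (fun x o' => sf s (ext x (phi s i o x)) (fincl (fsubD1set _ _) o')).

(* Gamma s i o  encodes  {i,o} \in Gamma(s)  with i an input and o an output;
   {a,b} \in Gamma(s) for arbitrary labels a b is then GammaU. *)
Definition GammaU (Gam : sys -> L -> L -> Prop) (s : sys) (a b : L) : Prop :=
  Gam s a b \/ Gam s b a.

Definition functional_system_algebra (S : sys -> Prop)
    (Gam : sys -> L -> L -> Prop) (phi : phiT) : Prop :=
      (forall s, S s -> [disjoint sI s & sO s]) /\
      (forall s i o, S s -> Gam s i o -> i \in sI s /\ o \in sO s) /\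
      (forall s i o, S s -> Gam s i o -> forall x, exists xi, Fix s i o x xi) /\
      (forall s i o, S s -> Gam s i o -> forall x, Fix s i o x (phi s i o x)) /\
      (forall s1 s2, S s1 -> S s2 -> [disjoint lam s1 & lam s2] -> S (par s1 s2)) /\
      (forall s i o, S s -> Gam s i o -> S (gamma phi s i o)) /\
      (forall s1 s2, S s1 -> S s2 -> [disjoint lam s1 & lam s2] ->
         (forall a b, a \in lam s1 -> b \in lam s1 ->
            (GammaU Gam (par s1 s2) a b <-> GammaU Gam s1 a b)) /\
         (forall a b, a \in lam s2 -> b \in lam s2 ->
            (GammaU Gam (par s1 s2) a b <-> GammaU Gam s2 a b))).

Definition unique_fixed_points (S : sys -> Prop) (Gam : sys -> L -> L -> Prop) :
    Prop :=
  forall s i o, S s -> Gam s i o -> forall x, exists! xi, Fix s i o x xi.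

Definition permits_reordering (S : sys -> Prop) (Gam : sys -> L -> L -> Prop)
    (phi : phiT) : Prop :=
  forall s i o i' o', S s -> Gam s i o -> Gam (gamma phi s i o) i' o' ->
    Gam s i' o' /\ Gam (gamma phi s i' o') i o.

Definition connection_order_invariant (S : sys -> Prop)
    (Gam : sys -> L -> L -> Prop) (phi : phiT) : Prop :=
  permits_reordering S Gam phi /\
  (forall s i o i' o', S s -> Gam s i o -> Gam (gamma phi s i o) i' o' ->
     gamma phi (gamma phi s i o) i' o' = gamma phi (gamma phi s i' o') i o).

End FunctionalSystems.

(* Main.v *)
Require Import Defs.
From mathcomp Require Import all_boot finmap boolp.
Set Implicit Arguments. Unset Strict Implicit.
Local Open Scope fset_scope.

Section H.
Variables (Lam X : Type).
Local Notation L := {classic Lam}.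

Lemma ext_at (I : {fset L}) (i : L) (x : (I `\ i) -> X) xi (j : I) :
  val j = i -> ext x xi j = xi.
Proof.
move=> h; rewrite /ext; move: (erefl (val j == i)).
case: {2 3}(val j == i) => // e.
by exfalso; move: (e); rewrite h eqxx.
Qed.

Lemma ext_off (I : {fset L}) (i : L) (x : (I `\ i) -> X) xi (j : I) (k : I `\ i) :
  val k = val j -> ext x xi j = x k.
Proof.
move=> h; rewrite /ext; move: (erefl (val j == i)).
case: {2 3}(val j == i) => e.
  by exfalso; move: (valP k) (e); rewrite in_fsetD1 h => /andP[/negbTE -> _].
by congr x; apply: val_inj.
Qed.

Lemma ext_eq (I : {fset L}) (i : L) (x : (I `\ i) -> X) xi (z : I -> X) :
  (forall j : I, val j = i -> z j = xi) ->
  (forall (k : I `\ i) (j : I), val k = val j -> z j = x k) -> ext x xi = z.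
Proof.
move=> h1 h2; apply: funext => j.
case: (eqVneq (val j) i) => e; first by rewrite ext_at // h1.
by rewrite (ext_off (k := [` inD1 e]) _ _) // (h2 [` inD1 e]).
Qed.

Lemma sys_eq (I1 I2 O1 O2 : {fset L}) (f1 : (I1 -> X) -> O1 -> X)
  (f2 : (I2 -> X) -> O2 -> X) : I1 = I2 -> O1 = O2 ->
  (forall x1 x2, (forall j1 j2, val j1 = val j2 -> x1 j1 = x2 j2) ->
     forall o1 o2, val o1 = val o2 -> f1 x1 o1 = f2 x2 o2) ->
  Sys f1 = Sys f2.
Proof.
move=> eI eO; subst => h; congr Sys; apply: funext => x; apply: funext => o.
by apply: h => // j1 j2 e; congr x; apply: val_inj.
Qed.
End H.

Theorem lemma4p4 (Lam X : Type) (S : sys Lam X -> Prop)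
    (Gam : sys Lam X -> {classic Lam} -> {classic Lam} -> Prop)
    (phi : phiT Lam X) :
  functional_system_algebra S Gam phi ->
  unique_fixed_points S Gam ->
  permits_reordering S Gam phi ->
  connection_order_invariant S Gam phi.
Proof.
move=> [hdis [hmem [hex [hphi [hpar [hgam hcomp]]]]]] hu hr.
split => // s i o i' o' Ss G1 G2.
have [G3 G4] := hr _ _ _ _ _ Ss G1 G2.
have S1 := hgam _ _ _ Ss G1.
have S2 := hgam _ _ _ Ss G3.
have [iI oO] := hmem _ _ _ Ss G1.
have [] := hmem _ _ _ S1 G2; rewrite /= !in_fsetD1 => /andP[ii' i'I] /andP[oo' o'O].
have uq : forall s i o, S s -> Gam s i o -> forall x a b,
    Fix (s:=s) (i:=i) o x a -> Fix (s:=s) (i:=i) o x b -> a = b.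
  move=> s0 i0 o0 S0 G0 x a b Fa Fb.
  have [c [_ hc]] := hu _ _ _ S0 G0 x.
  by rewrite -(hc _ Fa) -(hc _ Fb).
apply: sys_eq.
- by apply/fsetP => z; rewrite !in_fsetD1 andbCA.
- by apply/fsetP => z; rewrite !in_fsetD1 andbCA.
move=> x1 x2 hx o1 o2 ho /=.
set a1 := phi (gamma phi s i o) i' o' x1.
set b1 := phi s i o (ext x1 a1).
set a2 := phi (gamma phi s i' o') i o x2.
set b2 := phi s i' o' (ext x2 a2).
set p1 := ext (ext x1 a1) b1.
have F1 : Fix (s:=gamma phi s i o) (i:=i') o' x1 a1 := hphi _ _ _ S1 G2 x1.
have P1o' : forall w : sO s, val w = o' -> sf p1 w = a1.
  move=> w hw.
  have wD : val w \in sO s `\ o by rewrite in_fsetD1 hw oo' o'O.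
  rewrite -(F1 [` wD]) //=; congr (sf _ _); exact: val_inj.
have F2 : forall w : sO s, val w = o -> sf p1 w = b1 := hphi _ _ _ Ss G1 (ext x1 a1).
pose y : (sI s `\ i') -> X := fun k => p1 (fincl (fsubD1set _ _) k).
have Ey : ext y a1 = p1.
  apply: ext_eq => [j hj|k j hk].
    have ne : val j != i by rewrite hj.
    rewrite /p1 (ext_off (k := [` inD1 ne]) _ _) //.
    by rewrite ext_at.
  by rewrite /y; congr p1; apply: val_inj.
have FixY : Fix (s:=s) (i:=i') o' y a1.
  by move=> w hw; rewrite Ey; exact: P1o'.
have ha1 : phi s i' o' y = a1 := uq _ _ _ Ss G3 y _ _ (hphi _ _ _ Ss G3 y) FixY.
have Ex2 : ext x2 b1 = y.
  apply: ext_eq => [j hj|k j hk].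
    by rewrite /y /p1 ext_at.
  rewrite /y /p1.
  have ne : val (fincl (fsubD1set (sI s) i') j) != i.
    by rewrite /= -hk; have := valP k; rewrite in_fsetD1 => /andP[].
  rewrite (ext_off (k := [` inD1 ne]) _ _) //.
  have ne' : val ([` inD1 ne] : sI s `\ i) != i'.
    by rewrite /=; have := valP j; rewrite in_fsetD1 => /andP[].
  rewrite (ext_off (k := [` inD1 ne']) _ _) //.
  by apply: hx; rewrite /= hk.
have Fix2b1 : Fix (s:=gamma phi s i' o') (i:=i) o x2 b1.
  move=> w hw /=; rewrite Ex2 ha1 Ey; exact: F2.
have hb1 : b1 = a2 := uq _ _ _ S2 G4 x2 _ _ Fix2b1 (hphi _ _ _ S2 G4 x2).
have hb2 : b2 = a1 by rewrite /b2 -hb1 Ex2 ha1.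
have -> : fincl (fsubD1set (sO s) o) (fincl (fsubD1set (sO s `\ o) o') o1) =
          fincl (fsubD1set (sO s) o') (fincl (fsubD1set (sO s `\ o') o) o2).
  by apply: val_inj; rewrite /= ho.
congr (sf _ _).
apply: ext_eq => [j hj|k j hk].
  have ne : val j != i' by rewrite hj eq_sym.
  by rewrite (ext_off (k := [` inD1 ne]) _ _) // ext_at // -hb1.
case: (eqVneq (val k) i') => e.
  by rewrite !ext_at // -?hk.
rewrite (ext_off (k := [` inD1 e]) _ _) //.
have ne : val j != i' by rewrite -hk.
rewrite (ext_off (k := [` inD1 ne]) _ _) //.
have ne' : val ([` inD1 ne] : sI s `\ i') != i.
  by rewrite /= -hk; have := valP k; rewrite in_fsetD1 => /andP[].
rewrite (ext_off (k := [` inD1 ne']) _ _) //.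
by symmetry; apply: hx; rewrite /= hk.
Qed.
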